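(* Let $A\in\mathbb{R}^{n\times n}$, $B\in\mathbb{R}^{n\times m}$, $C\in\mathbb{R}^{p\times n}$, $E\in\mathbb{R}^{n\times p}$, let $\Theta\subset\mathbb{R}^p$ be a convex compact set, let $w:[0,T]\to\mathbb{R}^m$ be integrable, and let $x(0)\in\mathbb{R}^n$ be fixed, where $T>0$. For $z_0\in\mathbb{R}^p$ let $x^{z_0}$ denote the solution on $[0,T]$ of $\dot{x}=Ax+Bw+Ez_0$ with initial value $x(0)$, and define the set of $T$-stationary initial conditions $$\mathfrak{R}(T):=\{z_0\in\mathbb{R}^p:\ z_0\in Cx^{z_0}(t)+\Theta\ \text{for all } t\in[0,T]\}.$$ Let $\Psi$ be the entire function $\Psi(u)=\int_0^1 e^{uv}\,dv$ (equal to $1$ at $u=0$ and $(e^u-1)/u$ otherwise), extended to square matrices via its power series, and set $$\Phi(t):=I_p-tC\Psi(tA)E\in\mathbb{R}^{p\times p}.$$ Suppose $\Phi(t)$ is nonsingular for all $t\in[0,T]$. Then $$\mathfrak{R}(T)=\bigcap_{0\le t\le T}\Phi(t)^{-1}\big(Cx_*(t)+\Theta\big),$$ where $x_*(t):=e^{tA}x(0)+\int_0^t e^{(t-s)A}Bw(s)\,ds$ is the solution of $\dot x=Ax+Bw$ with initial value $x(0)$.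
   Context: For a set $K\subset\mathbb{R}^p$ and a vector $c$, $c+K=\{c+k:k\in K\}$, and $M^{-1}(K)=\{M^{-1}k: k\in K\}$ for invertible $M$. The set $\mathfrak{R}(T)$ consists of those initial backlash outputs $z_0$ which, if held constant over $[0,T]$ as the feedback input of the linear system, always remain in $Cx(t)+\Theta$ (i.e. the backlash output stays at rest on $[0,T]$). *)

(* Defs.v *)
From HB Require Import structures.
From mathcomp Require Import all_boot all_order all_algebra.
From mathcomp Require Import all_classical all_reals all_analysis.
Set Implicit Arguments. Unset Strict Implicit. Unset Printing Implicit Defensive.
Import Order.TTheory GRing.Theory Num.Theory.
Import numFieldNormedType.Exports.
Local Open Scope classical_set_scope.
Local Open Scope ring_scope.

Section Defs.
Variable R : realType.

Definition mxpow (n : nat) (M : 'M[R]_n) (k : nat) : 'M[R]_n :=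
  iter k (mulmx M) 1%:M.

Definition expm (n : nat) (M : 'M[R]_n) : 'M[R]_n :=
  \matrix_(i, j) limn (fun N => \sum_(k < N) (mxpow M k i j / (k`!)%:R)).

(* Psi(M) = sum_k M^k / (k+1)!, the power-series extension of
   Psi(u) = int_0^1 e^{uv} dv to square matrices. *)
Definition Psim (n : nat) (M : 'M[R]_n) : 'M[R]_n :=
  \matrix_(i, j) limn (fun N => \sum_(k < N) (mxpow M k i j / (k.+1`!)%:R)).

Definition cv_integral (k : nat) (t : R) (f : R -> 'cV[R]_k) : 'cV[R]_k :=
  \col_i (\int[lebesgue_measure]_(s in `[0, t]) f s i 0).

Definition translate (p : nat) (c : 'cV[R]_p) (K : set 'cV[R]_p) : set 'cV[R]_p :=
  [set c + k | k in K].

Definition inv_image (p : nat) (M : 'M[R]_p) (K : set 'cV[R]_p) : set 'cV[R]_p :=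
  [set invmx M *m k | k in K].

(* Solution on [0,T] of x' = A x + B w + E z0, x(0) = x0
   (variation-of-constants / Caratheodory solution). *)
Definition sol_z (n m p : nat) (A : 'M[R]_n) (B : 'M[R]_(n, m)) (E : 'M[R]_(n, p))
  (w : R -> 'cV[R]_m) (x0 : 'cV[R]_n) (z0 : 'cV[R]_p) (t : R) : 'cV[R]_n :=
  expm (t *: A) *m x0 +
  cv_integral t (fun s => expm ((t - s) *: A) *m (B *m w s + E *m z0)).

Definition sol_star (n m : nat) (A : 'M[R]_n) (B : 'M[R]_(n, m))
  (w : R -> 'cV[R]_m) (x0 : 'cV[R]_n) (t : R) : 'cV[R]_n :=
  expm (t *: A) *m x0 + cv_integral t (fun s => expm ((t - s) *: A) *m (B *m w s)).

Definition stationary_set (n m p : nat) (A : 'M[R]_n) (B : 'M[R]_(n, m))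
  (C : 'M[R]_(p, n)) (E : 'M[R]_(n, p)) (Theta : set 'cV[R]_p)
  (w : R -> 'cV[R]_m) (x0 : 'cV[R]_n) (T : R) : set 'cV[R]_p :=
  [set z0 | forall t, 0 <= t <= T ->
     translate (C *m sol_z A B E w x0 z0 t) Theta z0].

Definition Phi (n p : nat) (A : 'M[R]_n) (C : 'M[R]_(p, n)) (E : 'M[R]_(n, p))
  (t : R) : 'M[R]_p :=
  1%:M - t *: (C *m Psim (t *: A) *m E).

End Defs.

(* Main.v *)
Require Import Defs.
From HB Require Import structures.
From mathcomp Require Import all_boot all_order all_algebra.
From mathcomp Require Import all_classical all_reals all_analysis.
From mathcomp Require Import measurable_realfun.
From mathcomp Require Import ring lra.
Set Implicit Arguments. Unset Strict Implicit. Unset Printing Implicit Defensive.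
Import Order.TTheory GRing.Theory Num.Theory.
Import numFieldNormedType.Exports.
Local Open Scope classical_set_scope.
Local Open Scope ring_scope.

Section Scalar.
Variable R : realType.

Lemma cvg_pseries_bound (b : R^nat) (D c : R) x : 0 <= D -> 0 <= c ->
  (forall k, `|b k| <= D * c ^+ k / (k`!)%:R) -> cvgn (pseries b x).
Proof.
move=> D0 c0 hb. rewrite /pseries. apply: (@normed_cvg R R^o).
apply: (@series_le_cvg _ _ (D *: exp_coeff (c * `|x|))).
- by move=> k /=.
- by move=> k; rewrite /= mulr_ge0 // exp_coeff_ge0 // mulr_ge0.
- move=> k /=; rewrite /exp_coeff /= normrM normrX.
  have -> : (D *: (fun n : nat => (c * `|x|) ^+ n / n`!%:R)) k = D * ((c * `|x|) ^+ k / k`!%:R) by [].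
  apply: le_trans (ler_wpM2r (exprn_ge0 _ (normr_ge0 x)) (hb k)) _.
  rewrite le_eqVlt; apply/orP; left; apply/eqP; rewrite exprMn; ring.

- by apply: is_cvg_seriesZ; exact: is_cvg_series_exp_coeff.
Qed.


Lemma diffs_bound (b : R^nat) (D c : R) : 0 <= c ->
  (forall k, `|b k| <= D * c ^+ k / (k`!)%:R) ->
  forall k, `|pseries_diffs b k| <= (D * c) * c ^+ k / (k`!)%:R.
Proof.
move=> c0 hb k; rewrite /pseries_diffs normrM normr_nat.
apply: le_trans (ler_wpM2l (ler0n _ _) (hb k.+1)) _.
rewrite factS natrM le_eqVlt; apply/orP; left; apply/eqP.
rewrite exprS; field.
by apply/andP; split; rewrite ?pnatr_eq0 -?lt0n ?fact_gt0 // addrC natr1 pnatr_eq0.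
Qed.

Section Series.
Variables (a : nat -> R) (c : R).
Hypothesis c1 : 1 <= c.
Hypothesis ha : forall k, `|a k| <= c ^+ k.

Let c0 : 0 <= c. Proof. exact: le_trans c1. Qed.

Definition ecoef k := a k / (k`!)%:R.
Definition gcoef k := if k is k'.+1 then a k' / (k`!)%:R else 0.
Definition pcoef k := a k / (k.+1`!)%:R.
Definition exf u := limn (pseries ecoef u).
Definition Gf u := limn (pseries gcoef u).
Definition psf u := limn (pseries pcoef u).

Lemma ecoef_bound k : `|ecoef k| <= 1 * c ^+ k / (k`!)%:R.
Proof.
rewrite /ecoef normrM normfV normr_nat mul1r ler_wpM2r //.
Qed.

Lemma gcoef_bound k : `|gcoef k| <= 1 * c ^+ k / (k`!)%:R.
Proof.
case: k => [|k] /=; first by rewrite normr0 mul1r divr_ge0 ?exprn_ge0.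
rewrite normrM normfV normr_nat mul1r ler_wpM2r //.
apply: le_trans (ha k) _; rewrite exprS ler_peMl // exprn_ge0 //.
Qed.

Lemma pcoef_bound k : `|pcoef k| <= 1 * c ^+ k / (k`!)%:R.
Proof.
rewrite /pcoef normrM mul1r.
have hk : 0 < (k`!)%:R :> R by rewrite ltr0n fact_gt0.
have hk1 : 0 < (k.+1`!)%:R :> R by rewrite ltr0n fact_gt0.
rewrite normfV normr_nat.
apply: ler_pM; [exact: normr_ge0 | by rewrite invr_ge0 ltW | exact: ha | ].
rewrite lef_pV2 ?posrE // ler_nat factS leq_pmull //.
Qed.

Lemma diffs_gcoef : pseries_diffs gcoef = ecoef.
Proof.
apply/funext => k; rewrite /pseries_diffs /gcoef /ecoef factS natrM.
by rewrite mulrCA invfM mulVKf // pnatr_eq0.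
Qed.

Lemma cvg_any (b : R^nat) D x : 0 <= D ->
  (forall k, `|b k| <= D * c ^+ k / (k`!)%:R) ->
  [/\ cvgn (pseries b x), cvgn (pseries (pseries_diffs b) x) &
      cvgn (pseries (pseries_diffs (pseries_diffs b)) x)].
Proof.
move=> D0 hb; split.
- exact: (@cvg_pseries_bound b D c x D0 c0 hb).
- exact: (@cvg_pseries_bound _ _ c x (mulr_ge0 D0 c0) c0 (@diffs_bound b D c c0 hb)).
- exact: (@cvg_pseries_bound _ _ c x (mulr_ge0 (mulr_ge0 D0 c0) c0) c0
    (@diffs_bound _ _ c c0 (@diffs_bound b D c c0 hb))).
Qed.

Lemma is_derive_G (x : R) : is_derive x 1 Gf (exf x).
Proof.
have [h1 h2 h3] := @cvg_any gcoef 1 (`|x| + 1) ler01 gcoef_bound.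
have := pseries_snd_diffs h1 h2 h3.
rewrite diffs_gcoef /Gf /exf; apply.
by rewrite [ `|_ + 1| ]ger0_norm ?ltrDl // addr_ge0.
Qed.

Lemma derivable_exf (x : R) : derivable exf x 1.
Proof.
have [h1 h2 h3] := @cvg_any ecoef 1 (`|x| + 1) ler01 ecoef_bound.
have := pseries_snd_diffs h1 h2 h3.
move=> /(_ x); rewrite [ `|_ + 1| ]ger0_norm ?ltrDl ?addr_ge0 // => H.
have := H ltr01; case => //.
Qed.

Lemma continuous_exf : continuous exf.
Proof.
move=> x; apply: differentiable_continuous.
exact/derivable1_diffP/derivable_exf.
Qed.

Lemma derivable_Gf (x : R) : derivable Gf x 1.
Proof. by have [] := is_derive_G x. Qed.

Lemma continuous_Gf : continuous Gf.
Proof.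
move=> x; apply: differentiable_continuous.
exact/derivable1_diffP/derivable_Gf.
Qed.

Lemma Gf0 : Gf 0 = 0.
Proof.
rewrite /Gf (_ : pseries gcoef 0 = fun=> 0) ?lim_cst //.
apply/funext => N; rewrite /pseries /series /=.
apply: big1 => k _; case: k => [|k] /=; first by rewrite mul0r.
by rewrite expr0n /= mulr0.
Qed.

Lemma Gf_ps t : Gf t = t * psf t.
Proof.
have [h1 _ _] := @cvg_any pcoef 1 t ler01 pcoef_bound.
apply: cvg_lim => //.
rewrite -cvg_shiftS.
have -> : (fun n => pseries gcoef t n.+1) = (fun n => t * pseries pcoef t n).
  apply/funext => N; rewrite /pseries /series /= big_nat_recl //=.
  rewrite mul0r add0r big_distrr /=; apply: eq_bigr => k _.
  rewrite /pcoef exprS; ring.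
apply: cvgMl_tmp.
exact: h1.
Qed.


Lemma continuous_shift (t : R) : continuous (fun s : R => t - s).
Proof. by move=> x; apply: cvgB; [exact: cvg_cst | exact: cvg_id]. Qed.

Lemma continuous_exf_shift (t : R) : continuous (fun s => exf (t - s)).
Proof.
move=> x; apply: (@continuous_comp _ _ _ (fun s : R => t - s) exf).
  exact: continuous_shift.
exact: continuous_exf.
Qed.

Lemma int_exf (t : R) : 0 <= t ->
  \int[lebesgue_measure]_(s in `[0, t]) exf (t - s) = t * psf t.
Proof.
rewrite le_eqVlt => /orP[/eqP <-|t0].
  by rewrite set_itv1 Rintegral_set1 mul0r.
pose h := fun s : R => t - s.
pose F := fun s => - Gf (h s).
have dh (x : R) : is_derive x 1 h (-1).
  have H := (@is_deriveB _ _ _ (cst t) id x 1 0 1 (is_derive_cst _ _ _) (is_derive_id _ _)). rewrite sub0r in H. exact: H.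
have dF (x : R) : derivable F x 1.
  apply: derivableN; apply/derivable1_diffP.
  apply: (@differentiable_comp _ _ _ _ h Gf).
    by apply/derivable1_diffP; have [] := dh x.
  exact/derivable1_diffP/derivable_Gf.
have cF : continuous F.
  by move=> x; apply: differentiable_continuous; exact/derivable1_diffP/dF.
have F'E (x : R) : (F^`())%classic x = exf (t - x).
  rewrite derive1N; last first.
    apply/derivable1_diffP; apply: (@differentiable_comp _ _ _ _ h Gf).
      by apply/derivable1_diffP; have [] := dh x.
    exact/derivable1_diffP/derivable_Gf.
  rewrite (@derive1_comp _ h Gf); last 2 first.
    by have [] := dh x.
    exact: derivable_Gf.
  rewrite !derive1E (@derive_val _ _ _ _ _ _ _ (dh x)) (@derive_val _ _ _ _ _ _ _ (is_derive_G _)).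
  by rewrite mulrN1 opprK.
rewrite /Rintegral (@continuous_FTC2 _ (fun s => exf (t - s)) F) //.
- by rewrite /F /h subrr subr0 Gf0 oppr0 -EFinB /= sub0r opprK Gf_ps.
- by apply: continuous_subspaceT; exact: continuous_exf_shift.
- split.
  + by move=> x _; exact: dF.
  + by apply: cvg_at_right_filter; exact: cF.
  + by apply: cvg_at_left_filter; exact: cF.
Qed.

End Series.


Lemma continuous_bigsum k (f : 'I_k -> R -> R) :
  (forall j, continuous (f j)) -> continuous (fun x => \sum_j f j x).
Proof.
elim: k f => [|k IH] f hf.
  have -> : (fun x => \sum_(j < 0) f j x) = cst 0.
    by apply/funext => x; rewrite big_ord0.
  by move=> x; exact: cvg_cst.
have -> : (fun x => \sum_(j < k.+1) f j x) =
   (fun x => \sum_(j < k) f (widen_ord (leqnSn k) j) x) + f ord_max.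
  by apply/funext => x; rewrite big_ord_recr.
move=> x; apply: continuousD; last exact: hf.
by apply: (IH (fun j => f (widen_ord (leqnSn k) j))) => j; exact: hf.
Qed.

Local Notation mu := (@lebesgue_measure R).

Lemma Rint_sum (D : set R) (mD : measurable D) k (f : 'I_k -> R -> R) :
  (forall j, mu.-integrable D (EFin \o f j)) ->
  mu.-integrable D (EFin \o (fun x => \sum_j f j x)) /\
  \int[mu]_(x in D) (\sum_j f j x) = \sum_j \int[mu]_(x in D) f j x.
Proof.
elim: k f => [|k IH] f hf.
  have -> : (fun x => \sum_(j < 0) f j x) = cst 0.
    by apply/funext => x; rewrite big_ord0.
  rewrite big_ord0; split.
    by apply: (@eq_integrable _ _ _ mu D mD (cst 0%E)) => //; exact: integrable0.
  by rewrite Rintegral_cst // mul0r.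
have -> : (fun x => \sum_(j < k.+1) f j x) =
   (fun x => \sum_(j < k) f (widen_ord (leqnSn k) j) x + f ord_max x).
  by apply/funext => x; rewrite big_ord_recr.
have [i1 e1] := IH (fun j => f (widen_ord (leqnSn k) j)) (fun j => hf _).
split.
  have H := @integrableD _ _ _ mu D mD _ _ i1 (hf ord_max).
  apply: (@eq_integrable _ _ _ mu D mD _ _ _ H) => x _ /=; by rewrite EFinD.
by rewrite RintegralD // ?e1 ?big_ord_recr.
Qed.

Lemma continuous_integrable (t : R) (f : R -> R) : continuous f ->
  mu.-integrable `[0, t] (EFin \o f).
Proof.
move=> cf; apply: continuous_compact_integrable; first exact: segment_compact.
exact: continuous_subspaceT.
Qed.

Lemma continuous_bounded (t : R) (f : R -> R) : continuous f ->
  [bounded f x | x in `[0, t]].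
Proof.
move=> cf.
have sc : compact (`[0, t] : set R) by exact: segment_compact.
have := compact_bounded (continuous_compact (continuous_subspaceT cf) sc).
rewrite /bounded_near /=. apply: filterS => M HM x Dx. apply: HM. by exists x.
Qed.

End Scalar.

Section Mx.
Variables (R : realType) (n : nat) (A : 'M[R]_n).

Lemma mxpowS (M : 'M[R]_n) k : mxpow M k.+1 = M *m mxpow M k.
Proof. by []. Qed.

Lemma mxpow_scale (u : R) (M : 'M[R]_n) k : mxpow (u *: M) k = u ^+ k *: mxpow M k.
Proof.
elim: k => [|k IH]; first by rewrite /mxpow /= expr0 scale1r.
by rewrite !mxpowS IH -scalemxAl -scalemxAr scalerA exprS.
Qed.

Definition cA := 1 + \sum_i \sum_j `|A i j|.

Lemma cA1 : 1 <= cA.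
Proof.
rewrite /cA lerDl; apply: sumr_ge0 => i _; apply: sumr_ge0 => j _.
exact: normr_ge0.
Qed.

Lemma mxpow_bound k i j : `|mxpow A k i j| <= cA ^+ k.
Proof.
elim: k i j => [|k IH] i j.
  rewrite /mxpow /= mxE expr0; case: (i == j) => /=.
    by rewrite normr1.
  by rewrite normr0.
rewrite mxpowS mxE exprS.
apply: le_trans (ler_norm_sum _ _ _) _.
apply: (@le_trans _ _ (\sum_l `|A i l| * cA ^+ k)).
  by apply: ler_sum => l _; rewrite normrM; apply: ler_wpM2l.
rewrite -mulr_suml; apply: ler_wpM2r; first by apply: exprn_ge0; exact: le_trans cA1.
rewrite /cA; apply: (@le_trans _ _ (\sum_i \sum_j `|A i j|)); last by rewrite lerDr.
rewrite [X in _ <= X](bigD1 i) //= lerDl.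
by apply: sumr_ge0 => i' _; apply: sumr_ge0 => j' _; exact: normr_ge0.
Qed.

Lemma expm_entry (u : R) i j : expm (u *: A) i j = exf (fun k => mxpow A k i j) u.
Proof.
rewrite /expm mxE /exf; apply: (congr1 (fun v : nat -> R => limn v)); apply/funext => N.
rewrite /pseries /series /= big_mkord; apply: eq_bigr => k _.
by rewrite mxpow_scale mxE /ecoef; ring.
Qed.

Lemma Psim_entry (u : R) i j : Psim (u *: A) i j = psf (fun k => mxpow A k i j) u.
Proof.
rewrite /Psim mxE /psf; apply: (congr1 (fun v : nat -> R => limn v)); apply/funext => N.
rewrite /pseries /series /= big_mkord; apply: eq_bigr => k _.
by rewrite mxpow_scale mxE /pcoef; ring.
Qed.

Lemma cont_expm (t : R) i j : continuous (fun s => expm ((t - s) *: A) i j).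
Proof.
have -> : (fun s => expm ((t - s) *: A) i j) = (fun s => exf (fun k => mxpow A k i j) (t - s)).
  by apply/funext => s; rewrite expm_entry.
exact: (continuous_exf_shift cA1 (fun k => mxpow_bound k i j)).
Qed.

Lemma int_expm (t : R) i j : 0 <= t ->
  \int[lebesgue_measure]_(s in `[0, t]) expm ((t - s) *: A) i j = t * Psim (t *: A) i j.
Proof.
move=> t0.
have -> : (fun s => expm ((t - s) *: A) i j) = (fun s => exf (fun k => mxpow A k i j) (t - s)).
  by apply/funext => s; rewrite expm_entry.
by rewrite Psim_entry (int_exf cA1 (fun k => mxpow_bound k i j)).
Qed.

End Mx.

Lemma tr (R: realType) (f : R -> \bar R) (D : set R) : measurable D -> (lebesgue_measure : set R -> \bar R).-integrable D f -> (@lebesgue_measure R).-integrable D f.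
Proof.
move=> mD /integrableP[mf fi]; apply/integrableP; split; first exact: mf.
pose X := R.
pose Y := measurableTypeR R.
have mid1 : measurable_fun [set: Y] (id : Y -> X).
  move=> _ A mA; rewrite setTI; exact: mA.
have E : (\int[(lebesgue_measure : set R -> \bar R)]_(x in D) `|f x|)%E =
         (\int[(@lebesgue_measure R)]_(x in D) `|f x|)%E.
  apply: (@ge0_integral_pushforward _ _ Y X R id mid1 (@lebesgue_measure R) D) => //.
  exact: (measurableT_comp (@abse_measurable R setT) mf).
by rewrite -E.
Qed.

Section Main.
Variables (R : realType) (n m p : nat)
  (A : 'M[R]_n) (B : 'M[R]_(n, m)) (C : 'M[R]_(p, n)) (E : 'M[R]_(n, p))
  (w : R -> 'cV[R]_m) (T : R).
Hypothesis hw : forall i, (lebesgue_measure : set R -> \bar R).-integrable `[0, T]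
               (fun s => (w s i 0)%:E).
Local Notation mu := (@lebesgue_measure R).

Lemma key (t : R) (z0 : 'cV[R]_p) : 0 <= t <= T ->
  cv_integral t (fun s => expm ((t - s) *: A) *m (B *m w s + E *m z0)) =
  cv_integral t (fun s => expm ((t - s) *: A) *m (B *m w s)) +
  t *: (Psim (t *: A) *m (E *m z0)).
Proof.
move=> /andP[t0 tT].
have mD : measurable (`[0, t] : set R) by exact: measurable_itv.
apply/matrixP => i j; rewrite !mxE (ord1 j).
set M := fun s => expm ((t - s) *: A).
have cM l q : continuous (fun s => M s l q) by exact: cont_expm.
have cMr l (r : R) : continuous (fun s => M s i l * r).
  by move=> x; apply: continuousM; [exact: cM | exact: cvg_cst].
have cMB q : continuous (fun s => (M s *m B) i q).
  have -> : (fun s => (M s *m B) i q) = (fun s => \sum_l M s i l * B l q).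
    by apply/funext => s; rewrite mxE.
  by apply: continuous_bigsum => l; exact: cMr.
have sub : `[0, t] `<=` (`[0, T] : set R).
  move=> x /=; rewrite !in_itv /= => /andP[-> xt] /=; exact: le_trans xt tT.
have iw q : mu.-integrable `[0, t] (fun s => (w s q 0)%:E).
  have mT : measurable (`[0, T] : set R) by exact: measurable_itv.
  exact: (@integrableS _ _ _ mu _ _ _ mT mD sub (tr mT (hw q))).
have e1 : (fun s => (M s *m (B *m w s)) i 0) =
    (fun s => \sum_q (M s *m B) i q * w s q 0).
  by apply/funext => s; rewrite mulmxA mxE.
have e2 : (fun s => (M s *m (E *m z0)) i 0) =
    (fun s => \sum_l M s i l * (E *m z0) l 0).
  by apply/funext => s; rewrite mxE.
have i1 : mu.-integrable `[0, t] (EFin \o (fun s => (M s *m (B *m w s)) i 0)).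
  rewrite e1; apply: (proj1 (Rint_sum mD _)) => q.
  have mh : measurable_fun `[0, t] (fun s => (M s *m B) i q).
    apply: (measurable_funS measurableT) => //.
    exact: continuous_measurable_fun (cMB q).
  have H := @integrableMr _ _ _ mu _ mD _ _ mh (continuous_bounded t (cMB q)) (iw q).
  by apply: (@eq_integrable _ _ _ mu _ mD _ _ _ H) => x _ /=; rewrite EFinM.
have H2 := @Rint_sum _ _ mD _ (fun l s => M s i l * (E *m z0) l 0)
  (fun l => @continuous_integrable _ t _ (cMr l ((E *m z0) l 0))).
have i2 : mu.-integrable `[0, t] (EFin \o (fun s => (M s *m (E *m z0)) i 0)).
  by rewrite e2; exact: H2.1.
have -> : (fun s => (M s *m (B *m w s + E *m z0)) i 0) =
   (fun s => (M s *m (B *m w s)) i 0 + (M s *m (E *m z0)) i 0).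
  by apply/funext => s; rewrite mulmxDr mxE.
rewrite RintegralD // e2 H2.2; congr (_ + _).
rewrite mulr_sumr; apply: eq_bigr => l _.
rewrite RintegralZr //; last exact: continuous_integrable.
by rewrite /M int_expm // mulrA.
Qed.

Lemma sol_id (x0 : 'cV[R]_n) (t : R) (z0 : 'cV[R]_p) : 0 <= t <= T ->
  C *m sol_z A B E w x0 z0 t =
  C *m sol_star A B w x0 t + t *: (C *m Psim (t *: A) *m E) *m z0.
Proof.
move=> ht; rewrite /sol_z /sol_star key // addrA.
rewrite !mulmxDr; congr (_ + _); by rewrite -scalemxAr !mulmxA scalemxAl.
Qed.

End Main.

Theorem theorem1 (R : realType) (n m p : nat)
  (A : 'M[R]_n) (B : 'M[R]_(n, m)) (C : 'M[R]_(p, n)) (E : 'M[R]_(n, p))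
  (Theta : set 'cV[R]_p) (w : R -> 'cV[R]_m) (x0 : 'cV[R]_n) (T : R) :
  0 < T ->
  convex_set Theta -> compact Theta ->
  (forall i, (lebesgue_measure : set R -> \bar R).-integrable `[0, T]
               (fun s => (w s i 0)%:E)) ->
  (forall t, 0 <= t <= T -> Phi A C E t \in unitmx) ->
  stationary_set A B C E Theta w x0 T =
  \bigcap_(t in [set t : R | 0 <= t <= T])
     inv_image (Phi A C E t) (translate (C *m sol_star A B w x0 t) Theta).
Proof.
move=> T0 _ _ hw hU.
have PhiE t (z0 : 'cV[R]_p) : Phi A C E t *m z0 = z0 - t *: (C *m Psim (t *: A) *m E) *m z0.
  by rewrite /Phi mulmxBl mul1mx.
apply/seteqP; split => z0 /=.
- move=> Hz t ht; have [th Th eq] := Hz t ht.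
  exists (Phi A C E t *m z0); last by rewrite mulKmx // hU.
  exists th => //.
  have e := eq; rewrite (sol_id A B C E hw x0 z0 ht) in e.
  by rewrite PhiE -{1}e addrAC addrK.
- move=> Hz t ht; have [k [th Th eq] ek] := Hz t ht.
  exists th => //.
  have : Phi A C E t *m z0 = k by rewrite -ek mulKVmx // hU.
  rewrite PhiE => e2.
  rewrite (sol_id A B C E hw x0 z0 ht) addrAC eq -e2.
  by rewrite subrK.
Qed.
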